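(* The homomorphism $C_2^{\rm lb}(X)\to\mathbb Z_p$ defined on generators by \[ ((a,b),(a,c))\longmapsto (a-b)\,\frac{(a-b+2c)^p+(a+b)^p-2(a+c)^p}{p} \] (computed with integer lifts of $a,b,c$, the numerator in $\mathbb Z$ being divisible by $p$, then reduced mod $p$) vanishes on $D_2^{\rm lb}(X)+D_2^{\rm lb}(X,\rho)$, and the induced homomorphism $\theta_p:C_2^{\rm SLB}(X)\to\mathbb Z_p$ is a $2$-cocycle, i.e. $\theta_p\circ\partial_3^{\rm SLB}=0$.
   Context: Let $p$ be an odd prime, $X=\mathbb Z_p$, and $[a,b,c]=a-b+c$. Let $\rho((a,b))=(b,a)$, $(a,b)\,\underline{\star}\,(a,c)=(c,[a,b,c])$, $(a,b)\,\overline{\star}\,(a,c)=(c,[a,c,b])$. For $n\ge1$ let $C_n^{\rm lb}(X)$ be the free abelian group on tuples $((a,b_1),\dots,(a,b_n))$, $a,b_i\in X$ ($C_n^{\rm lb}=0$ for $n\le0$), with boundary for $n\ge2$ \[ \partial_n^{\rm lb}((a,b_1),\dots,(a,b_n))=\sum_{i=1}^n(-1)^i\Big\{((a,b_1),\dots,\widehat{(a,b_i)},\dots,(a,b_n))-\big((b_i,[a,b_1,b_i]),\dots,(b_i,[a,b_{i-1},b_i]),(b_i,[a,b_i,b_{i+1}]),\dots,(b_i,[a,b_i,b_n])\big)\Big\} \] and $\partial_n^{\rm lb}=0$ for $n\le1$. Let $D_n^{\rm lb}(X)$ be generated by tuples with $b_i=b_{i+1}$ for some $i$, and $D_n^{\rm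 lb}(X,\rho)$ generated by all $((a,b_1),\dots,(a,b_n))+((a,b_1)\underline\star(a,b_i),\dots,(a,b_{i-1})\underline\star(a,b_i),\rho((a,b_i)),(a,b_{i+1})\overline\star(a,b_i),\dots,(a,b_n)\overline\star(a,b_i))$. Both are subcomplexes, and $C_n^{\rm SLB}(X)=C_n^{\rm lb}(X)/(D_n^{\rm lb}(X)+D_n^{\rm lb}(X,\rho))$ with the induced boundary $\partial_n^{\rm SLB}$ is a chain complex. *)

(* Defs.v *)
From HB Require Import structures.
From mathcomp Require Import all_boot all_order all_algebra.
Set Implicit Arguments. Unset Strict Implicit. Unset Printing Implicit Defensive.
Import Order.TTheory GRing.Theory Num.Theory.
Local Open Scope ring_scope.

(* X = Z_p, a generator ((a,b_1),...,(a,b_n)) of C_n^lb(X) is encoded as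
   (a, bs) with bs : {ffun 'I_n -> X}, bs i = b_{i+1} (0-based indices). *)
Definition gen_t (p n : nat) := ('Z_p * {ffun 'I_n -> 'Z_p})%type.

(* C_n^lb(X): X is finite, so the free abelian group on the generators is
   the group of all integer-valued functions on the generators. *)
Definition chain (p n : nat) := {ffun gen_t p n -> int}.

Definition gen (p n : nat) (g : gen_t p n) : chain p n :=
  [ffun h => ((h == g) : nat)%:Z].

Definition br (p : nat) (a b c : 'Z_p) : 'Z_p := a - b + c.

Definition del (p n : nat) (bs : {ffun 'I_n -> 'Z_p}) (i : 'I_n)
  : {ffun 'I_n.-1 -> 'Z_p} := [ffun j => bs (lift i j)].

Definition face2 (p n : nat) (a : 'Z_p) (bs : {ffun 'I_n -> 'Z_p}) (i : 'I_n)
  : {ffun 'I_n.-1 -> 'Z_p} :=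
  [ffun j : 'I_n.-1 => let k := lift i j in
             if (k < i)%N then br a (bs k) (bs i) else br a (bs i) (bs k)].

(* boundary of a generator (paper's index i+1 gives sign (-1)^(i+1)) *)
Definition bd_gen (p n : nat) (g : gen_t p n) : chain p n.-1 :=
  \sum_(i < n)
     (gen (g.1, del g.2 i) - gen (g.2 i, face2 g.1 g.2 i)) *~ ((-1) ^+ i.+1).

Definition bd (p n : nat) (c : chain p n) : chain p n.-1 :=
  if (2 <= n)%N then \sum_(g : gen_t p n) bd_gen g *~ c g else 0.

(* D_n^lb(X): subgroup generated by the generators with b_i = b_{i+1} for
   some i; i.e. chains supported on such generators. *)
Definition degenerate (p n : nat) (g : gen_t p n) : bool :=
  [exists i : 'I_n, exists j : 'I_n, (j == i.+1 :> nat) && (g.2 i == g.2 j)].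

Definition inD (p n : nat) (c : chain p n) : Prop :=
  forall g, c g != 0 -> degenerate g.

(* generators of D_n^lb(X,rho): for (a, bs) and i,
   ((a,b_1),...,(a,b_n)) +
   ((a,b_1)*_(a,b_i),...,(a,b_{i-1})*_(a,b_i), rho(a,b_i),
    (a,b_{i+1})*^(a,b_i),...,(a,b_n)*^(a,b_i))
   where (a,b)*_(a,c) = (c,[a,b,c]), (a,b)*^(a,c) = (c,[a,c,b]),
   rho(a,b) = (b,a). *)
Definition rho_tuple (p n : nat) (a : 'Z_p) (bs : {ffun 'I_n -> 'Z_p}) (i : 'I_n)
  : {ffun 'I_n -> 'Z_p} :=
  [ffun j : 'I_n => if (j < i)%N then br a (bs j) (bs i)
             else if j == i then a else br a (bs i) (bs j)].

Definition rho_gen (p n : nat) (x : gen_t p n * 'I_n) : chain p n :=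
  gen x.1 + gen (x.1.2 x.2, rho_tuple x.1.1 x.1.2 x.2).

Definition inDrho (p n : nat) (c : chain p n) : Prop :=
  exists k : {ffun (gen_t p n * 'I_n) -> int},
    c = \sum_(x : gen_t p n * 'I_n) rho_gen x *~ k x.

Definition num (p : nat) (a b c : int) : int :=
  (a - b + 2 * c) ^+ p + (a + b) ^+ p - 2 * (a + c) ^+ p.

Definition theta_int (p : nat) (a b c : int) : 'Z_p :=
  ((a - b) * (num p a b c %/ p)%Z)%:~R.

Definition theta_val (p : nat) (a b c : 'Z_p) : 'Z_p :=
  theta_int p (val a)%:Z (val b)%:Z (val c)%:Z.

Definition theta_gen (p : nat) (g : gen_t p 2) : 'Z_p :=
  theta_val g.1 (g.2 ord0) (g.2 ord_max).

Definition theta (p : nat) (c : chain p 2) : 'Z_p :=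
  \sum_(g : gen_t p 2) (c g)%:~R * theta_gen g.

(* Main.v *)
Require Import Defs.
From HB Require Import structures.
From mathcomp Require Import all_boot all_order all_algebra.
From mathcomp Require Import ring.
Import Order.TTheory GRing.Theory Num.Theory.
Local Open Scope ring_scope.

Lemma charZp {p} : prime p -> p \in [pchar 'Z_p].
Proof. by move=> hp; rewrite inE hp /= pchar_Zp ?prime_gt1. Qed.

Lemma Zp_int_eq0 {p} (hp : prime p) (u : int) : (u%:~R == 0 :> 'Z_p) = (p%:Z %| u)%Z.
Proof. by rewrite (dvdz_pcharf (charZp hp)). Qed.

Lemma fermat_int {p} (hp : prime p) (u : int) : (u ^+ p)%:~R = u%:~R :> 'Z_p.
Proof. by rewrite rmorphXn; have := pFrobenius_aut_int (charZp hp) u; rewrite pFrobenius_autE. Qed.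

Lemma num_dvd p (hp : prime p) (a b c : int) : (p%:Z %| num p a b c)%Z.
Proof.
rewrite -(Zp_int_eq0 hp) /num intrD mulrNz intrD intrM !fermat_int // !(intrD, mulrNz, intrM).
apply/eqP; ring.
Qed.

Lemma pow_expand (R : comRingType) (x e : R) n :
  exists q, (x + e) ^+ n.+1 = x ^+ n.+1 + x ^+ n * e *+ n.+1 + e ^+ 2 * q.
Proof.
elim: n => [|n [q IH]]; first by exists 0; rewrite expr1 expr0 mul1r mulr1n; ring.
exists (q * x + x ^+ n *+ n.+1 + q * e).
rewrite exprS IH !exprS; ring.
Qed.

Lemma pow_cong {p} (hp : prime p) (x y : int) : (p%:Z %| x - y)%Z ->
  exists M, x ^+ p = y ^+ p + p%:Z * p%:Z * M.
Proof.
move=> /dvdzP [k hk].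
have ex : x = y + k * p%:Z by rewrite -hk; ring.
have : (0 < p)%N by apply: prime_gt0.
case: p hp hk ex => // n hp hk ex _.
have [q hq] := pow_expand _ y (k * n.+1%:Z) n.
exists (y ^+ n * k + k ^+ 2 * q).
rewrite ex hq; ring.
Qed.

Lemma val_cast {p} (x : 'Z_p) : ((val x)%:Z)%:~R = x.
Proof. exact: natr_Zp. Qed.

Lemma cast_cong {p} (hp : prime p) (u v : int) : (p%:Z %| u - v)%Z -> u%:~R = v%:~R :> 'Z_p.
Proof.
move=> h; apply/eqP; rewrite -subr_eq0 -mulrNz -intrD (Zp_int_eq0 hp) //.
Qed.

Lemma theta_int_cong {p} (hp : prime p) (a b c a' b' c' : int) :
  (p%:Z %| a - a')%Z -> (p%:Z %| b - b')%Z -> (p%:Z %| c - c')%Z ->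
  theta_int p a b c = theta_int p a' b' c'.
Proof.
move=> /dvdzP [k1 h1] /dvdzP [k2 h2] /dvdzP [k3 h3].
have ea : a = a' + k1 * p%:Z by rewrite -h1; ring.
have eb : b = b' + k2 * p%:Z by rewrite -h2; ring.
have ec : c = c' + k3 * p%:Z by rewrite -h3; ring.
have [M1 E1] : exists M, (a - b + 2 * c) ^+ p = (a' - b' + 2 * c') ^+ p + p%:Z * p%:Z * M.
  by apply: pow_cong => //; apply/dvdzP; exists (k1 - k2 + 2 * k3); rewrite ea eb ec; ring.
have [M2 E2] : exists M, (a + b) ^+ p = (a' + b') ^+ p + p%:Z * p%:Z * M.
  by apply: pow_cong => //; apply/dvdzP; exists (k1 + k2); rewrite ea eb; ring.
have [M3 E3] : exists M, (a + c) ^+ p = (a' + c') ^+ p + p%:Z * p%:Z * M.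
  by apply: pow_cong => //; apply/dvdzP; exists (k1 + k3); rewrite ea ec; ring.
have EN : num p a b c = num p a' b' c' + p%:Z * p%:Z * (M1 + M2 - 2 * M3).
  by rewrite /num E1 E2 E3; ring.
have pn0 : p%:Z != 0 by rewrite eqz_nat -lt0n prime_gt0.
have hq : (num p a b c %/ p%:Z)%Z = (num p a' b' c' %/ p%:Z)%Z + p%:Z * (M1 + M2 - 2 * M3).
  apply: (mulIf pn0); rewrite mulrDl !divzK ?num_dvd // EN; ring.
rewrite /theta_int; apply: cast_cong => //; rewrite hq ea eb.
apply/dvdzP; exists ((k1 - k2) * ((num p a' b' c' %/ p%:Z)%Z + p%:Z * (M1 + M2 - 2 * M3)) + (a' - b') * (M1 + M2 - 2 * M3)).
ring.
Qed.

Lemma theta_lift {p} (hp : prime p) (a b c : int) (x y z : 'Z_p) :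
  a%:~R = x -> b%:~R = y -> c%:~R = z -> theta_int p a b c = theta_val x y z.
Proof.
move=> <- <- <-; rewrite /theta_val; apply: theta_int_cong => //;
by rewrite -(Zp_int_eq0 hp) intrD mulrNz val_cast subrr.
Qed.

Lemma theta_val_cast {p} (hp : prime p) (a b c : int) :
  theta_val (a%:~R : 'Z_p) b%:~R c%:~R = theta_int p a b c.
Proof. by apply/esym/theta_lift. Qed.

Lemma br_cast {p} (a b c : int) : br (a%:~R : 'Z_p) b%:~R c%:~R = (a - b + c)%:~R.
Proof. by rewrite /br !intrD mulrNz. Qed.

Lemma theta_add {p} (c1 c2 : chain p 2) : theta (c1 + c2) = theta c1 + theta c2.
Proof. by rewrite /theta -big_split; apply: eq_bigr => g _; rewrite ffunE intrD mulrDl. Qed.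

Lemma theta0 {p} : theta (0 : chain p 2) = 0.
Proof. by rewrite /theta big1 // => g _; rewrite ffunE mulr0z mul0r. Qed.

Lemma theta_opp {p} (c : chain p 2) : theta (- c) = - theta c.
Proof. by rewrite /theta -sumrN; apply: eq_bigr => g _; rewrite ffunE mulrNz mulNr. Qed.

Lemma theta_sub {p} (c1 c2 : chain p 2) : theta (c1 - c2) = theta c1 - theta c2.
Proof. by rewrite theta_add theta_opp. Qed.

Lemma theta_sum {p} (I : finType) (F : I -> chain p 2) :
  theta (\sum_(i : I) F i) = \sum_(i : I) theta (F i).
Proof. exact: (big_morph _ theta_add theta0). Qed.

Lemma theta_mulz {p} (c : chain p 2) (k : int) : theta (c *~ k) = k%:~R * theta c.
Proof.
rewrite /theta mulr_sumr; apply: eq_bigr => g _.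
by rewrite ffunMzE mulrzz intrM mulrA [_ * k%:~R]mulrC.
Qed.

Lemma theta_gen_eq {p} (g : gen_t p 2) : theta (gen g) = theta_gen g.
Proof.
rewrite /theta (bigD1 g) //= big1 ?addr0 => [|h hg]; rewrite !ffunE.
  by rewrite eqxx mul1r.
by rewrite (negbTE hg) mul0r.
Qed.

Lemma theta_int_diag {p} (A B : int) : theta_int p A B B = 0.
Proof.
rewrite /theta_int /num.
have -> : A - B + 2 * B = A + B by ring.
have -> : (A + B) ^+ p + (A + B) ^+ p - 2 * (A + B) ^+ p = 0 by ring.
by rewrite div0z mulr0.
Qed.

Lemma theta_degen {p} (g : gen_t p 2) : degenerate g -> theta_gen g = 0.
Proof.
case: g => a bs /existsP [i /existsP [j /andP [/eqP hij /eqP hb]]].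
have hi : nat_of_ord i = 0%N.
  by have := ltn_ord j; rewrite hij; case: (nat_of_ord i).
rewrite /theta_gen /=.
have -> : (ord0 : 'I_2) = i by apply/val_inj.
have -> : (ord_max : 'I_2) = j by apply/val_inj; rewrite /= hij hi.
rewrite hb.
by rewrite /theta_val theta_int_diag.
Qed.

Lemma theta_int_rho1 {p} (A B C : int) : theta_int p B A (A - B + C) = - theta_int p A B C.
Proof.
rewrite /theta_int -mulrNz; congr (_%:~R); rewrite /num.
have -> : B - A + 2 * (A - B + C) = A - B + 2 * C by ring.
have -> : B + A = A + B by ring.
have -> : B + (A - B + C) = A + C by ring.
ring.
Qed.

Lemma theta_int_rho2 {p} (A B C : int) : theta_int p C (A - B + C) A = - theta_int p A B C.
Proof.
rewrite /theta_int -mulrNz; congr (_%:~R); rewrite /num.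
have -> : C - (A - B + C) + 2 * A = A + B by ring.
have -> : C + (A - B + C) = A - B + 2 * C by ring.
have -> : C + A = A + C by ring.
rewrite [(A + B) ^+ p + _]addrC.
ring.
Qed.

Lemma rho_aux1 {p} (hp : prime p) (x y z : 'Z_p) :
  theta_val x y z + theta_val y x (br x y z) = 0.
Proof.
rewrite -(val_cast x) -(val_cast y) -(val_cast z) br_cast !theta_val_cast //.
by rewrite theta_int_rho1 subrr.
Qed.

Lemma rho_aux2 {p} (hp : prime p) (x y z : 'Z_p) :
  theta_val x y z + theta_val z (br x y z) x = 0.
Proof.
rewrite -(val_cast x) -(val_cast y) -(val_cast z) br_cast !theta_val_cast //.
by rewrite theta_int_rho2 subrr.
Qed.

Lemma theta_rho {p} (hp : prime p) (x : gen_t p 2 * 'I_2) : theta (rho_gen x) = 0.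
Proof.
rewrite /rho_gen theta_add !theta_gen_eq.
case: x => [[a bs] i].
have [->|->] : i = ord0 \/ i = ord_max.
  by case: i => [[|[|n]] hn]; [left; apply/val_inj|right; apply/val_inj|].
all: rewrite /theta_gen /rho_tuple /= !ffunE /=.
  exact: rho_aux1.
exact: rho_aux2.
Qed.

Lemma cocyc_num p (A B0 B1 B2 : int) :
  - ((A - B1) * num p A B1 B2 - (B0 - (A - B0 + B1)) * num p B0 (A - B0 + B1) (A - B0 + B2))
  + ((A - B0) * num p A B0 B2 - (B1 - (A - B0 + B1)) * num p B1 (A - B0 + B1) (A - B1 + B2))
  - ((A - B0) * num p A B0 B1 - (B2 - (A - B0 + B2)) * num p B2 (A - B0 + B2) (A - B1 + B2)) = 0.
Proof.
rewrite /num.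
have -> : B0 - (A - B0 + B1) + 2 * (A - B0 + B2) = A - B1 + 2 * B2 by ring.
have -> : B0 + (A - B0 + B1) = A + B1 by ring.
have -> : B0 + (A - B0 + B2) = A + B2 by ring.
have -> : B1 - (A - B0 + B1) + 2 * (A - B1 + B2) = A + B0 - 2 * B1 + 2 * B2 by ring.
have -> : B1 + (A - B0 + B1) = A - B0 + 2 * B1 by ring.
have -> : B1 + (A - B1 + B2) = A + B2 by ring.
have -> : B2 - (A - B0 + B2) + 2 * (A - B1 + B2) = A + B0 - 2 * B1 + 2 * B2 by ring.
have -> : B2 + (A - B0 + B2) = A - B0 + 2 * B2 by ring.
have -> : B2 + (A - B1 + B2) = A - B1 + 2 * B2 by ring.
ring.
Qed.

Lemma theta_bd_gen {p} (hp : prime p) (g : gen_t p 3) : theta (bd_gen g) = 0.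
Proof.
case: g => a bs.
pose f (k : nat) := bs (inord k).
have -> : bs = [ffun o => f (nat_of_ord o)] by apply/ffunP => o; rewrite ffunE /f inord_val.
rewrite /bd_gen theta_sum !big_ord_recl big_ord0 !theta_mulz !theta_sub !theta_gen_eq.
rewrite /theta_gen /del /face2 /= !ffunE /= /bump /=.
rewrite -(val_cast a) -(val_cast (f 0%N)) -(val_cast (f 1%N)) -(val_cast (f 2%N)).
rewrite !br_cast !theta_val_cast //.
move: (val a)%:Z (val (f 0%N))%:Z (val (f 1%N))%:Z (val (f 2%N))%:Z => A B0 B1 B2.
have pn0 : p%:Z != 0 by rewrite eqz_nat -lt0n prime_gt0.
have key :
  - ((A - B1) * (num p A B1 B2 %/ p%:Z)%Z - (B0 - (A - B0 + B1)) * (num p B0 (A - B0 + B1) (A - B0 + B2) %/ p%:Z)%Z)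
  + ((A - B0) * (num p A B0 B2 %/ p%:Z)%Z - (B1 - (A - B0 + B1)) * (num p B1 (A - B0 + B1) (A - B1 + B2) %/ p%:Z)%Z)
  - ((A - B0) * (num p A B0 B1 %/ p%:Z)%Z - (B2 - (A - B0 + B2)) * (num p B2 (A - B0 + B2) (A - B1 + B2) %/ p%:Z)%Z) = 0.
  apply: (mulIf pn0); rewrite mul0r -(cocyc_num p A B0 B1 B2).
  rewrite -[in RHS](divzK (num_dvd p hp A B1 B2)).
  rewrite -[in RHS](divzK (num_dvd p hp B0 (A - B0 + B1) (A - B0 + B2))).
  rewrite -[in RHS](divzK (num_dvd p hp A B0 B2)).
  rewrite -[in RHS](divzK (num_dvd p hp B1 (A - B0 + B1) (A - B1 + B2))).
  rewrite -[in RHS](divzK (num_dvd p hp A B0 B1)).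
  rewrite -[in RHS](divzK (num_dvd p hp B2 (A - B0 + B2) (A - B1 + B2))).
  ring.
have := congr1 (fun z : int => (z%:~R : 'Z_p)) key.
rewrite /= mulr0z /theta_int => key'.
have m1 : forall n, ((-1) ^+ n)%:~R = (-1) ^+ n :> 'Z_p.
  by move=> n; rewrite rmorphXn rmorphN1.
rewrite !m1 -[RHS]key' !(intrD, intrM, mulrNz).
ring.
Qed.

Theorem lemma3p3 (p : nat) (hp : prime p) (hodd : odd p) :
  (forall a b c : int, (p%:Z %| num p a b c)%Z) /\
  (forall (a b c : int) (x y z : 'Z_p),
      a%:~R = x -> b%:~R = y -> c%:~R = z -> theta_int p a b c = theta_val x y z) /\
  (forall d1 d2 : chain p 2, inD d1 -> inDrho d2 -> theta (d1 + d2) = 0) /\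
  (forall c : chain p 3, theta (bd c) = 0).
Proof.
split; first exact: num_dvd.
split; first by move=> a b c x y z; apply: theta_lift.
split.
  move=> d1 d2 hD [k ->]; rewrite theta_add theta_sum.
  rewrite big1 => [|x _]; last by rewrite theta_mulz theta_rho // mulr0.
  rewrite addr0 /theta big1 // => g _.
  have [->|h] := eqVneq (d1 g) 0; first by rewrite mulr0z mul0r.
  by rewrite theta_degen ?mulr0 //; apply: hD.
move=> c; rewrite /bd /= theta_sum big1 // => g _.
by rewrite theta_mulz theta_bd_gen // mulr0.
Qed.
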